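(* Suppose $\ell$ is a proper loss and fix $g\in\Delta_m$. Define $f^*:\mathcal{X}\to\Delta_m$ by $f^*_y(x)=\frac{\frac{g_y}{\pi_y}\eta_y(x)}{\sum_{j=1}^m\frac{g_j}{\pi_j}\eta_j(x)}$ at points where the denominator is positive, and $f^*(x)$ an arbitrary fixed element of $\Delta_m$ otherwise. Then $f^*$ minimizes $f\mapsto\sum_{i=1}^m g_i\,\ell_i(f)$ over all measurable $f:\mathcal{X}\to\Delta_m$.
   Context: $\mathcal{X}$ is a measurable space, $[m]=\{1,\dots,m\}$, $(X,Y)\sim\mathcal{D}$ on $\mathcal{X}\times[m]$, $\eta_y(x)=\mathbb{P}(Y=y\mid X=x)$, $\pi_y=\mathbb{P}(Y=y)>0$ for all $y$. $\Delta_m$ is the probability simplex in $\mathbb{R}^m$. A loss $\ell:[m]\times\Delta_m\to[0,\infty)$ is proper if for every $p\in\Delta_m$, $p\in\arg\min_{q\in\Delta_m}\sum_y p_y\ell(y,q)$. Per-class loss: $\ell_i(f)=\mathbb{E}[\ell(Y,f(X))\mid Y=i]$ for measurable $f:\mathcal{X}\to\Delta_m$. *)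

(* Defs.v *)
From HB Require Import structures.
From mathcomp Require Import all_boot all_order all_algebra.
From mathcomp Require Import all_classical all_reals all_analysis.
Set Implicit Arguments. Unset Strict Implicit. Unset Printing Implicit Defensive.
Import Order.TTheory GRing.Theory Num.Theory.
Local Open Scope ring_scope.

Section Defs.
Context {R : realType} {m : nat}.

Definition in_simplex (p : 'I_m -> R) : Prop :=
  (forall i, 0 <= p i) /\ \sum_(i < m) p i = 1.

Definition is_loss (l : 'I_m -> ('I_m -> R) -> R) : Prop :=
  forall y p, in_simplex p -> 0 <= l y p.

Definition proper_loss (l : 'I_m -> ('I_m -> R) -> R) : Prop :=
  forall p, in_simplex p -> forall q, in_simplex q ->
    \sum_(y < m) p y * l y p <= \sum_(y < m) p y * l y q.

Context {d : measure_display} {X : measurableType d}.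

Definition meas_predictor (f : X -> 'I_m -> R) : Prop :=
  (forall i, measurable_fun setT (fun x => f x i)) /\ (forall x, in_simplex (f x)).

Variables (mu : probability X R) (eta : X -> 'I_m -> R).

(* pi_y = P(Y = y) = E[eta_y(X)] *)
Definition prior (y : 'I_m) : \bar R := (\int[mu]_x (eta x y)%:E)%E.

(* per-class loss l_i(f) = E[l(Y,f(X)) | Y = i] = E[l(i,f(X)) eta_i(X)] / pi_i *)
Definition class_loss (l : 'I_m -> ('I_m -> R) -> R) (i : 'I_m)
    (f : X -> 'I_m -> R) : \bar R :=
  (((fine (prior i))^-1)%:E * \int[mu]_x (l i (f x) * eta x i)%:E)%E.

Definition weighted_risk (l : 'I_m -> ('I_m -> R) -> R) (g : 'I_m -> R)
    (f : X -> 'I_m -> R) : \bar R :=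
  (\sum_(i < m) (g i)%:E * class_loss l i f)%E.

Definition fstar (g c : 'I_m -> R) (x : X) : 'I_m -> R :=
  let Z := \sum_(j < m) g j / fine (prior j) * eta x j in
  if 0 < Z then (fun y => g y / fine (prior y) * eta x y / Z) else c.

End Defs.

(* Main.v *)
Require Import Defs.
From HB Require Import structures.
From mathcomp Require Import all_boot all_order all_algebra.
From mathcomp Require Import all_classical all_reals all_analysis.
From mathcomp Require Import measurable_realfun.
Import Order.TTheory GRing.Theory Num.Theory.
Local Open Scope ring_scope.
Local Open Scope classical_set_scope.
Lemma minv (R : realType) : measurable_fun setT (@GRing.inv R).
Proof.
have -> : (@GRing.inv R) = fun t => if t == 0 then 0 else t^-1.
  by apply: funext => t; case: eqP => // ->; rewrite invr0.
apply: measurable_fun_if => //.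
- apply: (@measurable_realfun.measurable_fun_eqr _ _ _ setT id (fun=> 0)).
  exact: measurable_id. exact: measurable_cst.
- match goal with |- measurable_fun ?A _ => have -> : A = [set t | t != 0] end.
    by apply/seteqP; split => t /=; [case => _; case: (t == 0)|move/negbTE].
  apply: measurable_realfun.open_continuous_measurable_fun.
  + exact: open_neq.
  + by move=> x; rewrite inE /= => x0; apply: inv_continuous.
Qed.

Theorem lemma1 (R : realType) (d : measure_display) (X : measurableType d)
  (m : nat) (mu : probability X R) (eta : X -> 'I_m -> R)
  (eta_meas : forall y, measurable_fun setT (fun x => eta x y))
  (eta_ge0 : forall x y, 0 <= eta x y)
  (eta_sum1 : forall x, \sum_(y < m) eta x y = 1)
  (pi_gt0 : forall y, (0 < prior mu eta y)%E)
  (l : 'I_m -> ('I_m -> R) -> R)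
  (l_loss : is_loss l)
  (l_meas : forall (f : X -> 'I_m -> R), meas_predictor f ->
              forall y, measurable_fun setT (fun x => l y (f x)))
  (l_proper : proper_loss l)
  (g : 'I_m -> R) (g_simplex : in_simplex g)
  (c : 'I_m -> R) (c_simplex : in_simplex c) :
  meas_predictor (fstar mu eta g c) /\
  forall f : X -> 'I_m -> R, meas_predictor f ->
    (weighted_risk mu eta l g (fstar mu eta g c) <= weighted_risk mu eta l g f)%E.
Proof.
set pp := fun i => fine (prior mu eta i).
set w := fun x i => g i / pp i * eta x i.
set Z := fun x => \sum_(j < m) w x j.
have pp0 i : 0 <= pp i.
  rewrite /pp /prior; apply: fine_ge0; apply: integral_ge0 => x _.
  by rewrite lee_fin.
have w0 x i : 0 <= w x i.
  by rewrite /w; rewrite mulr_ge0 ?divr_ge0 //; case: g_simplex.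
have Z0 x : 0 <= Z x by apply: sumr_ge0 => i _.
have fsE x : fstar mu eta g c x = if 0 < Z x then (fun y => w x y / Z x) else c.
  by [].
have wm i : measurable_fun setT (fun x => w x i).
  by apply: measurable_realfun.measurable_funM => //; exact: measurable_cst.
have Zm : measurable_fun setT Z by apply: measurable_sum.
have fsimp x : in_simplex (fstar mu eta g c x).
  rewrite fsE; case: ifP => // Zp; split.
    by move=> i; rewrite divr_ge0.
  by rewrite -mulr_suml divff // gt_eqF.
have mp : meas_predictor (fstar mu eta g c).
  split => // i.
  have -> : (fun x => fstar mu eta g c x i) =
      (fun x => if 0 < Z x then w x i / Z x else c i).
    by apply: funext => x; rewrite fsE; case: ifP.
  apply: measurable_fun_ifT.
  - by apply: measurable_realfun.measurable_fun_ltr => //; exact: measurable_cst.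
  - apply: measurable_realfun.measurable_funM => //; apply: measurableT_comp => //; exact: minv.
  - exact: measurable_cst.
split => // f fP.
have riskE h : meas_predictor h -> weighted_risk mu eta l g h =
    (\int[mu]_x (\sum_(i < m) w x i * l i (h x))%:E)%E.
  move=> hP; rewrite /weighted_risk.
  under eq_integral do rewrite -sumEFin.
  rewrite ge0_integral_sum //; last first.
    - move=> i x _; rewrite lee_fin; apply: mulr_ge0 => //; apply: l_loss; by case: hP.
    - move=> i; apply/measurable_EFinP; apply: measurable_realfun.measurable_funM => //.
      exact: l_meas.
  apply: eq_bigr => i _.
  rewrite /class_loss muleA -EFinM -ge0_integralZl //; last first.
    - rewrite lee_fin; apply: mulr_ge0; first exact: (proj1 g_simplex i).
      by rewrite invr_ge0; exact: (pp0 i).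
    - move=> x _; rewrite lee_fin; apply: mulr_ge0 => //; apply: l_loss; by case: hP.
    - apply/measurable_EFinP; apply: measurable_realfun.measurable_funM => //; exact: l_meas.
  apply: eq_integral => x _; rewrite -EFinM; congr EFin.
  by rewrite /w -/(pp i) mulrA mulrC mulrA [_ * eta x i]mulrC -!mulrA.
rewrite !riskE //.
apply: ge0_le_integral => //.
- move=> x _; rewrite lee_fin; apply: sumr_ge0 => i _; rewrite mulr_ge0 //.
  by apply: l_loss.
- apply/measurable_EFinP; apply: measurable_sum => i.
  apply: measurable_realfun.measurable_funM => //; exact: l_meas.
- apply/measurable_EFinP; apply: measurable_sum => i.
  apply: measurable_realfun.measurable_funM => //; exact: l_meas.
move=> x _; rewrite lee_fin.
have := fsimp x; rewrite fsE; case: ifP => Zp hs.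
  have := l_proper _ hs _ (proj2 fP x).
  set q := (fun y : 'I_m => w x y / Z x).
  have E (a : 'I_m -> R) : \sum_(y < m) w x y / Z x * a y = (Z x)^-1 * \sum_(y < m) w x y * a y.
    by rewrite mulr_sumr; apply: eq_bigr => y _; rewrite mulrAC mulrC mulrA.
  by rewrite (E (fun y => l y q)) (E (fun y => l y (f x))) ler_pM2l ?invr_gt0.
have Ze : Z x = 0 by apply/eqP; rewrite eq_le Z0 andbT leNgt Zp.
have wz i : w x i = 0.
  by move/eqP: Ze; rewrite psumr_eq0 // => /allP/(_ i (mem_index_enum _))/eqP.
by rewrite !big1 // => i _; rewrite wz mul0r.
Qed.
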